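(* Let $\mathbb{K}$ be a field, $\mathbf{S}=(s_i)_{i\ge0}$ a sequence over $\mathbb{K}$ (with $s_i=0$ for $i<0$), and $\Theta(t)=t^{-1}\sum_{i\ge0}s_it^{-i}\in\mathbb{K}(\!(t^{-1})\!)$. For an integer $k\ge0$ write the continued fraction expansion $\langle t^k\Theta(t)\rangle=[0;A_1(t),A_2(t),\dots]$. Then the $k$-th diagonal $(\widetilde W(\mathbf{S})[m,k])_{m\ge0}$ of the number wall consists of successive blocks of zeros of lengths $\deg A_i-1$ separated by single nonzero entries. Explicitly, for $m\ge0$, $\widetilde W(\mathbf{S})[m,k]\ne0$ if and only if $m=\sum_{i=1}^{j}\deg A_i-1$ for some $j\ge1$.
   Context: $\langle\cdot\rangle$ denotes the fractional part of a Laurent series (removing all non-negative powers of $t$). Continued fraction partial quotients are polynomials of degree $\ge1$ after the zeroth. The number wall of $\mathbf{S}$: for $m\ge0$ and $n\in\mathbb{Z}$, $W(\mathbf{S})[m,n]=\det\big(s_{n-i+j}\big)_{0\le i,j\le m}$ (the determinant of the $(m+1)\times(m+1)$ Toeplitz matrix whose first row is $s_n,\dots,s_{n+m}$ and whose first column is $s_n,s_{n-1},\dots,s_{n-m}$); also $W[-1,n]=1$. The $k$-th diagonal entries are $\widetilde W(\mathbf{S})[m,k]:=W(\mathbf{S})[m,m+k]$. *)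

(* Defs.v *)
From HB Require Import structures.
From mathcomp Require Import all_boot all_order all_algebra.
Set Implicit Arguments. Unset Strict Implicit. Unset Printing Implicit Defensive.
Import Order.TTheory GRing.Theory Num.Theory.
Local Open Scope ring_scope.

(* We represent it as a pair (P, f) with P : {poly K} and f : nat -> K, standing for
       P(t) + sum_{q >= 0} f q * t^{-(q+1)}.                                      *)
Definition laurent (K : fieldType) := ({poly K} * (nat -> K))%type.

(* coefficient of t^n, n : int  (Negz q = -(q+1)) *)
Definition lcoef (K : fieldType) (x : laurent K) (n : int) : K :=
  match n with
  | Posz p => x.1`_p
  | Negz q => x.2 q
  end.

(* coefficient of t^n in the product x*y : the (finite) convolution
   sum_i lcoef x i * lcoef y (n - i).  Nonzero terms need i < size x.1 and
   n - i < size y.1, so i ranges over [n - size y.1, size x.1]; the sum below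
   runs over i = size x.1 - j for j = 0 .. size x.1 + size y.1 + |n|, which covers it. *)
Definition lmul_coef (K : fieldType) (x y : laurent K) (n : int) : K :=
  \sum_(j < (size x.1 + size y.1 + `|n| + 1)%N)
     lcoef x ((size x.1)%:Z - j%:Z) * lcoef y (n - (size x.1)%:Z + j%:Z).

Definition lmul_is_one (K : fieldType) (x y : laurent K) : Prop :=
  forall n : int, lmul_coef x y n = (n == 0)%:R.

Definition theta (K : fieldType) (s : nat -> K) : laurent K := (0, s).

(* fractional part < t^k x > : its coefficient of t^{-(q+1)} is the coefficient
   of t^{-(q+1)-k} in x *)
Definition frac_mulXk (K : fieldType) (k : nat) (x : laurent K) : nat -> K :=
  fun q => lcoef x (Negz q - k%:Z).

(* Continued fraction expansion  x0 = [0; A_1, A_2, ...]  of a fractional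
   Laurent series x0 (with x0 = frac part r 0).  r i is the i-th complete-quotient
   remainder (fractional part); as long as r i <> 0 one has
        1 / r_i = A_{i+1} + r_{i+1},  i.e.  r_i * (A_{i+1} + r_{i+1}) = 1,
   so A_{i+1} is the polynomial part of 1/r_i and r_{i+1} its fractional part.
   The expansion stops at the first i with r i = 0 (then A_{i+1}, ... are
   not partial quotients). *)
Definition nonzero_frac (K : fieldType) (f : nat -> K) : Prop := exists q, f q != 0.

Definition is_cf_expansion (K : fieldType) (x0 : nat -> K)
    (A : nat -> {poly K}) (r : nat -> nat -> K) : Prop :=
  r 0%N = x0 /\
  forall i : nat, nonzero_frac (r i) ->
    lmul_is_one ((0 : {poly K}), r i) (A i.+1, r i.+1).

Definition deg (K : fieldType) (p : {poly K}) : nat := (size p).-1.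

Definition sext (K : fieldType) (s : nat -> K) (i : int) : K :=
  match i with Posz p => s p | Negz _ => 0 end.

Definition wall (K : fieldType) (s : nat -> K) (m : nat) (n : int) : K :=
  \det (\matrix_(i < m.+1, j < m.+1) sext s (n - (i : nat)%:Z + (j : nat)%:Z)).

Definition wdiag (K : fieldType) (s : nat -> K) (m : nat) (k : int) : K :=
  wall s m ((m : nat)%:Z + k).

(* Main.v *)
Require Import Defs.
From HB Require Import structures.
From mathcomp Require Import all_boot all_order all_algebra.
From mathcomp Require Import ring zify.
From Stdlib Require Import Classical_Prop.
Import Order.TTheory GRing.Theory Num.Theory.
Local Open Scope ring_scope.
Set Implicit Arguments. Unset Strict Implicit.

Section Core.
Variable K : fieldType.

Definition Cp (N : nat) (c : nat -> K) : {poly K} := \poly_(i < N) c i.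
Definition cv (Q : {poly K}) (c : nat -> K) (i : nat) : K :=
  \sum_(a < i.+1) Q`_a * c (i - a)%N.
Definition Zc (c : nat -> K) (m : nat) : Prop :=
  exists Q : {poly K}, Q != 0 /\ (size Q <= m.+1)%N /\
    forall j, (j <= m)%N -> cv Q c (m + j) = 0.

Lemma cvE N Q c i : (i < N)%N -> cv Q c i = (Q * Cp N c)`_i.
Proof.
move=> hi; rewrite coefM; apply: eq_bigr => a _; rewrite coef_poly.
by rewrite (leq_ltn_trans (leq_subr a i) hi).
Qed.

Lemma dvdXnP n (p : {poly K}) : reflect (forall i, (i < n)%N -> p`_i = 0) ('X^n %| p).
Proof.
apply: (iffP idP).
  by move/dvdpP => [q ->] i hi; rewrite coefMXn hi.
move=> H; apply/dvdpP; exists (\poly_(i < size p) p`_(i + n)).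
apply/polyP => i; rewrite coefMXn; case: ltnP => [/H //| hn].
rewrite coef_poly subnK //; case: ltnP => // hs.
by rewrite nth_default // (leq_trans hs) // leq_subr.
Qed.

Lemma Z_dvd c m N : ((m + m).+1 <= N)%N ->
  Zc c m <-> exists Q R : {poly K}, [/\ Q != 0, (size Q <= m.+1)%N, (size R <= m)%N &
     'X^((m + m).+1) %| Q * Cp N c - R].
Proof.
move=> hN; split.
  move=> [Q [Q0 [sQ HQ]]]; exists Q, (\poly_(i < m) (Q * Cp N c)`_i).
  split => //.
  apply/dvdXnP => i hi; rewrite coefB coef_poly; case: ifP => him; first by rewrite subrr.
  rewrite subr0; move: him => /negbT; rewrite -leqNgt => him.
  have -> : i = (m + (i - m))%N by lia.
  rewrite -cvE; last by lia.
  apply: HQ; lia.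
move=> [Q [R [Q0 sQ sR hd]]]; exists Q; split => //; split => // j hj.
rewrite (cvE Q c (N:=N)); last by lia.
have -> : (Q * Cp N c)`_(m + j) = (Q * Cp N c - R)`_(m + j) + R`_(m + j).
  by rewrite coefB subrK.
rewrite (nth_default _ (leq_trans sR (leq_addr _ _))) addr0.
by move/dvdXnP: hd; apply; lia.
Qed.

Lemma Zzero c m : (forall q, c q = 0) -> Zc c m.
Proof.
move=> hc; exists 1; split; first exact: oner_neq0.
split; first by rewrite size_poly1.
by move=> j _; rewrite /cv big1 // => a _; rewrite hc mulr0.
Qed.


Lemma Xn0 n : 'X^n != 0 :> {poly K}.
Proof. by rewrite -size_poly_gt0 size_polyXn. Qed.

Lemma size_sub_leq (p q : {poly K}) n : (size p <= n)%N -> (size q <= n)%N -> (size (p - q)%R <= n)%N.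
Proof.
move=> hp hq; apply: leq_trans (size_polyD _ _) _.
by rewrite geq_max hp size_polyN hq.
Qed.

Lemma size_add_leq (p q : {poly K}) n : (size p <= n)%N -> (size q <= n)%N -> (size (p + q)%R <= n)%N.
Proof.
move=> hp hq; apply: leq_trans (size_polyD _ _) _.
by rewrite geq_max hp hq.
Qed.

Lemma size_mul_le (p q : {poly K}) n1 n2 : (size p <= n1)%N -> (size q <= n2.+1)%N -> (size (p * q)%R <= n1 + n2)%N.
Proof.
move=> hp hq; have := size_polyMleq p q; lia.
Qed.

Section Rec.
Variables (c e : nat -> K) (A : {poly K}) (a : nat).
Hypothesis sA : size A = a.+2.
Definition Ah : {poly K} := \poly_(i < a.+2) A`_(a.+1 - i).
Definition Dp N := Ah + 'X^(a.+2) * Cp N e.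
Hypothesis hCD : forall N, 'X^N %| Cp N c * Dp N - 'X^a.

Lemma Dp0 N : (Dp N)`_0 != 0.
Proof.
rewrite coefD coefXnM /= addr0 coef_poly /= subn0.
have : lead_coef A != 0 by rewrite lead_coef_eq0 -size_poly_gt0 sA.
by rewrite lead_coefE sA.
Qed.

Lemma copD k N : coprimep ('X^k) (Dp N).
Proof.
apply: coprimep_expl.
have : coprimep (Dp N) ('X - 0%:P) by rewrite coprimep_XsubC rootE horner_coef0 Dp0.
by rewrite polyC0 subr0 coprimep_sym.
Qed.

Lemma Cdiv N : (a <= N)%N -> 'X^a %| Cp N c.
Proof.
move=> hN.
have h1 := dvdp_trans (dvdp_exp2l 'X hN) (hCD N).
rewrite (dvdp_subl _ (dvdpp _)) in h1.
by rewrite Gauss_dvdpl ?copD in h1.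
Qed.

Lemma Zlow m : (m < a)%N -> Zc c m.
Proof.
move=> hm; apply/(@Z_dvd c m ((m + m).+1 + a)); first by lia.
exists 'X^m, 0; split; [exact: Xn0 | by rewrite size_polyXn | by rewrite size_poly0 |].
rewrite subr0; apply: (@dvdp_trans _ ('X^(m + a))); first by apply: dvdp_exp2l; lia.
by rewrite exprD dvdp_mul // Cdiv //; lia.
Qed.

Lemma fwd m N (Q R : {poly K}) : (a <= m)%N -> ((m + m).+1 <= N)%N -> Q != 0 -> (size Q <= m.+1)%N ->
  (size R <= m)%N -> 'X^((m + m).+1) %| Q * Cp N c - R ->
  exists P : {poly K}, [/\ P != 0, (size P <= m - a)%N & 'X^((m + m).+1 - a) %| Q - P * Dp N].
Proof.
move=> ha hN Q0 sQ sR hd.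
set C := Cp N c; set D := Dp N.
have hX : 'X^((m+m).+1) %| C * D - 'X^a := dvdp_trans (dvdp_exp2l _ hN) (hCD N).
have h1 : 'X^((m+m).+1) %| Q * 'X^a - R * D.
  have -> : Q * 'X^a - R * D = (Q * C - R) * D - Q * (C * D - 'X^a) by ring.
  by apply: dvdp_sub; [apply: dvdp_mulr | apply: dvdp_mull].
have h2 : 'X^a %| R * D.
  have hle : (a <= (m+m).+1)%N by lia.
  have := dvdp_trans (dvdp_exp2l 'X hle) h1.
  by rewrite dvdp_subr //; apply: dvdp_mull.
rewrite Gauss_dvdpl ?copD // in h2.
set P := R %/ 'X^a.
have hR : R = P * 'X^a by rewrite divpK.
exists P.
have h3 : 'X^((m+m).+1 - a) %| Q - P * D.
  rewrite -(dvdp_mul2r _ _ (Xn0 a)) -exprD subnK; last by lia.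
  have -> : (Q - P * D) * 'X^a = Q * 'X^a - R * D by rewrite hR; ring.
  exact: h1.
split => //.
  apply/eqP => P0; move: h3; rewrite P0 mul0r subr0 => h3.
  have := dvdp_leq Q0 h3; rewrite size_polyXn => hh. move: (leq_trans hh sQ) ha. clear. lia.
rewrite /P size_divp ?Xn0 // size_polyXn /=; exact: leq_sub2r.
Qed.

Lemma Zmid : ~ Zc c a.
Proof.
move/(@Z_dvd c a (a + a).+1 (leqnn _)) => [Q [R [Q0 sQ sR hd]]].
have [P [P0 sP _]] := fwd (leqnn _) (leqnn _) Q0 sQ sR hd.
by move: sP; rewrite subnn leqn0 size_poly_eq0 (negbTE P0).
Qed.

Lemma Zhigh m' m : m = (m' + a.+1)%N -> Zc c m <-> Zc e m'.
Proof.
move=> mE.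
have [N NE] : exists N, N = (m + m).+1 by exists (m + m).+1.
have hN : ((m' + m').+1 <= N)%N by lia.
rewrite (@Z_dvd c m N (eq_leq (esym NE))) (@Z_dvd e m' N hN).
split.
  move=> [Q [R [Q0 sQ sR hd]]].
  have ha : (a <= m)%N by lia.
  have [P [P0 sP h3]] := fwd ha (eq_leq (esym NE)) Q0 sQ sR hd.
  set T := Q - P * Ah.
  have hT : 'X^((m+m).+1 - a) %| T - 'X^(a.+2) * (P * Cp N e).
    by have -> : T - 'X^(a.+2) * (P * Cp N e) = Q - P * Dp N by rewrite /T /Dp; ring.
  have hTa : 'X^(a.+2) %| T.
    have hle : (a.+2 <= (m+m).+1 - a)%N by lia.
    have := dvdp_trans (dvdp_exp2l 'X hle) hT.
    by rewrite dvdp_subl //; apply: dvdp_mulr.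
  set S := T %/ 'X^(a.+2).
  have hTS : T = S * 'X^(a.+2) by rewrite divpK.
  exists P, S; split => //.
  - by apply: leq_trans sP _; lia.
  - rewrite /S size_divp ?Xn0 // size_polyXn /=.
    have : (size T <= m.+1)%N.
      apply: size_sub_leq => //.
      have -> : m.+1 = ((m - a) + a.+1)%N by lia.
      by apply: size_mul_le => //; apply: size_poly.
    move: (size T) => t; lia.
  - move: hT; rewrite hTS.
    have -> : ((m+m).+1 - a)%N = ((m' + m').+1 + a.+2)%N by lia.
    rewrite exprD.
    have -> : S * 'X^(a.+2) - 'X^(a.+2) * (P * Cp N e) = - ((P * Cp N e - S) * 'X^(a.+2)) by ring.
    by rewrite dvdpNr dvdp_mul2r // Xn0.
move=> [P [S [P0 sP sS hd]]].
set C := Cp N c; set E := Cp N e.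
exists (P * Ah + 'X^(a.+2) * S), (P * 'X^a).
have key : (P * Ah + 'X^(a.+2) * S) * C - P * 'X^a
     = P * (C * Dp N - 'X^a) - 'X^(a.+2) * (P * E - S) * C by rewrite /Dp /C /E; ring.
have hdv : 'X^((m+m).+1) %| (P * Ah + 'X^(a.+2) * S) * C - P * 'X^a.
  rewrite key; apply: dvdp_sub; first by apply: dvdp_mull; rewrite -NE; apply: hCD.
  have -> : ((m+m).+1 = a.+2 + (m' + m').+1 + a)%N by lia.
  by rewrite !exprD dvdp_mul ?dvdp_mul ?Cdiv //; lia.
have sR : (size (P * 'X^a)%R <= m)%N by rewrite size_mulXn //; lia.
have R0 : P * 'X^a != 0 by rewrite mulf_neq0 ?Xn0.
split => //.
- apply/eqP => Q0; move: hdv; rewrite Q0 mul0r sub0r dvdpNr => hdv.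
  have := dvdp_leq R0 hdv; rewrite size_polyXn; move: (size _) sR => t; lia.
- apply: size_add_leq.
    have -> : m.+1 = (m' + 1 + a.+1)%N by lia.
    by apply: size_mul_le; [rewrite addn1 | apply: size_poly].
  case: (eqVneq S 0) => [->|S0]; first by rewrite mulr0 size_poly0.
  rewrite mulrC size_mulXn //; move: (size S) sS => t; lia.
Qed.

End Rec.
End Core.

Section Step.
Variable K : fieldType.

Lemma lmulE (c : nat -> K) (y : laurent K) n :
  lmul_coef ((0 : {poly K}), c) y n =
  \sum_(q < (size y.1 + `|n|)%N) c q * lcoef y (n + (q.+1)%:Z).
Proof.
rewrite /lmul_coef size_poly0 add0n addn1 big_ord_recl /= coef0 mul0r add0r.
apply: eq_bigr => q _; rewrite add0n subn0 subr0 /bump /=.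
by rewrite add1n.
Qed.

Lemma cf_step (c e : nat -> K) (A : {poly K}) :
  lmul_is_one ((0 : {poly K}), c) (A, e) ->
  exists a, size A = a.+2 /\ forall N, 'X^N %| Cp N c * Dp e A a N - 'X^a.
Proof.
move=> H.
have sA : (1 < size A)%N.
  rewrite ltnNge; apply/negP => hs.
  have := H 0; rewrite lmulE /= big1 ?eqxx.
    by move/eqP; rewrite eq_sym oner_eq0.
  move=> q _ /=; rewrite add0n nth_default ?mulr0 //.
  exact: leq_trans hs _.
exists (size A).-2; split; first by case: (size A) sA => [|[|n]].
set a := (size A).-2.
have sAe : size A = a.+2 by rewrite /a; case: (size A) sA => [|[|n]].
clearbody a.
move=> N; apply/dvdXnP => i hi.
rewrite coefB coefXn coefM.
have := H (a%:Z - i%:Z); rewrite lmulE /= => Hi.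
rewrite subr_eq0 eqz_nat eq_sym in Hi.
rewrite -Hi; apply/eqP; rewrite subr_eq0; apply/eqP.
have hle : (i.+1 <= size A + `|a%:Z - i%:Z|)%N by rewrite sAe; lia.
rewrite (bigID (fun q : 'I_(size A + `|a%:Z - i%:Z|) => (q < i.+1)%N)) /=.
rewrite [X in _ = _ + X]big1 ?addr0; last first.
  move=> [q hq] /= hqi; rewrite -leqNgt in hqi.
  have -> : (a%:Z - i%:Z + (q.+1)%:Z) = Posz (a.+1 + q - i) by lia.
  by rewrite /= nth_default ?mulr0 // sAe; lia.
rewrite -(big_ord_widen _ (fun q => c q * lcoef (A, e) (a%:Z - i%:Z + (q.+1)%:Z)) hle).
apply: eq_bigr => [[q hq]] _ /=.
rewrite coef_poly (leq_ltn_trans _ hi) ?leq_ord //; congr (_ * _).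
rewrite coefD coefXnM coef_poly.
case: ltnP => hj.
  rewrite addr0.
  have -> : (a%:Z - i%:Z + (q.+1)%:Z) = Posz (a.+1 - (i - q)) by lia.
  by [].
rewrite add0r coef_poly.
rewrite (leq_ltn_trans _ hi); last by lia.
have -> : (a%:Z - i%:Z + (q.+1)%:Z) = Negz (i - q - a.+2) by rewrite NegzE; lia.
by [].
Qed.

End Step.

Section Final.
Variable K : fieldType.

Lemma frac_theta (s : nat -> K) k q : frac_mulXk k (theta s) q = s (q + k)%N.
Proof.
rewrite /frac_mulXk /theta.
have -> : Negz q - k%:Z = Negz (q + k) by rewrite !NegzE; lia.
by [].
Qed.

Lemma cv_row m (v : 'rV[K]_(m.+1)) c j : (j < m.+1)%N ->
  cv (rVpoly v) c (m + j) = \sum_(i < m.+1) v 0 i * c (m - i + j)%N.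
Proof.
move=> hj; rewrite /cv.
rewrite (bigID (fun a : 'I_((m + j).+1) => (a < m.+1)%N)) /=.
rewrite [X in X + _ = _](_ : _ = \sum_(a < (m + j).+1 | (a < m.+1)%N)
    (fun a => (rVpoly v)`_a * c (m + j - a)%N) a) //.
rewrite [X in _ + X]big1 ?addr0; last first.
  by move=> [a ha] /= hna; rewrite coef_rVpoly insubN ?mul0r.
have hle : (m.+1 <= (m + j).+1)%N by lia.
rewrite -(big_ord_widen _ (fun a => (rVpoly v)`_a * c (m + j - a)%N) hle).
apply: eq_bigr => i _; rewrite coef_rVpoly_ord; congr (_ * c _).
have := ltn_ord i; lia.
Qed.

Lemma wall_Z (s : nat -> K) k m c : (forall q, c q = s (q + k)%N) ->
  (wdiag s m k%:Z != 0) <-> ~ Zc c m.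
Proof.
move=> hc.
set M := \matrix_(i < m.+1, j < m.+1) sext s (m%:Z + k%:Z - (i : nat)%:Z + (j : nat)%:Z).
have hw : wdiag s m k%:Z = \det M by [].
have hM : forall (v : 'rV_(m.+1)) (j : 'I_(m.+1)), (v *m M) 0 j = cv (rVpoly v) c (m + j).
  move=> v j; rewrite cv_row // mxE; apply: eq_bigr => i _; rewrite mxE.
  have -> : (m%:Z + k%:Z - (i : nat)%:Z + (j : nat)%:Z) = Posz (m - i + j + k).
    by have := ltn_ord i; lia.
  by rewrite /= hc.
rewrite hw; split.
  move=> hdet [Q [Q0 [sQ HQ]]]; move/negP: hdet; apply; apply/det0P.
  exists (poly_rV Q).
    apply/negP => /eqP h; move/negP: Q0; apply; apply/eqP.
    by rewrite -(poly_rV_K sQ) h raddf0.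
  apply/rowP => j; rewrite hM mxE poly_rV_K // HQ //.
  by rewrite -ltnS ltn_ord.
move=> nZ; apply/negP => /det0P [v v0 hv]; apply: nZ; exists (rVpoly v); split.
  apply/negP => /eqP h; move/negP: v0; apply; apply/eqP.
  by rewrite -[v]rVpolyK h raddf0.
split.
  by apply/leq_sizeP => i hi; rewrite coef_rVpoly insubN // -leqNgt.
move=> j hj; have := congr1 (fun w : 'rV_(m.+1) => w 0 (inord j)) hv.
by rewrite /= hM inordK ?mxE.
Qed.

Lemma main_ind (A : nat -> {poly K}) (r : nat -> nat -> K)
  (hcf : forall i, nonzero_frac (r i) -> lmul_is_one ((0 : {poly K}), r i) (A i.+1, r i.+1)) m :
  forall i, ~ Zc (r i) m <-> exists j, (0 < j)%N /\
     (forall l, (l < j)%N -> nonzero_frac (r (i + l)%N)) /\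
     m = (\sum_(i.+1 <= l < (i + j).+1) deg (A l) - 1)%N.
Proof.
elim/ltn_ind: m => m IH i.
case: (classic (nonzero_frac (r i))) => nz; last first.
  split.
    move=> nZ; exfalso; apply: nZ; apply: Zzero => q; apply/eqP.
    by apply/negPn/negP => hq; apply: nz; exists q.
  move=> [j [j0 [hnz _]]]; exfalso; apply: nz; have := hnz 0%N j0; by rewrite addn0.
have [a [sA hCD]] := cf_step (hcf i nz).
have dA : deg (A i.+1) = a.+1 by rewrite /deg sA.
have sum_first : forall j, (0 < j)%N -> \sum_(i.+1 <= l < (i + j).+1) deg (A l)
    = (a.+1 + \sum_(i.+2 <= l < (i.+1 + j.-1).+1) deg (A l))%N.
  move=> j j0; have -> : ((i + j).+1 = (i.+1 + j.-1).+1)%N by lia.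
  by rewrite (@big_ltn _ _ _ i.+1) ?dA // ltnS leq_addr.
case: (ltngtP m a) => hma.
- split.
    by move=> nZ; exfalso; exact: nZ (Zlow sA hCD hma).
  move=> [j [j0 [_ hm]]]; rewrite sum_first // in hm; lia.
- have [m' mE] : exists m', m = (m' + a.+1)%N by exists (m - a.+1)%N; lia.
  have hm' : (m' < m)%N by lia.
  rewrite (Zhigh sA hCD mE) (IH m' hm' i.+1).
  split.
    move=> [j [j0 [hnz hm]]]; exists j.+1; split => //; split.
      move=> [|l] hl; first by rewrite addn0.
      by rewrite addnS -addSn; apply: hnz; lia.
    have nz1 := hnz 0%N j0; rewrite addn0 in nz1.
    have [b [sB _]] := cf_step (hcf _ nz1).
    have Spos : (0 < \sum_(i.+2 <= l < (i.+1 + j).+1) deg (A l))%N.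
      rewrite (@big_ltn _ _ _ i.+2) /deg ?sB //; lia.
    rewrite sum_first //=.
    move: hm Spos; move: (\sum_(_ <= _ < _) _) => S; lia.
  move=> [j [j0 [hnz hm]]]; case: j j0 hnz hm => [//|[|j]] _ hnz hm.
    by rewrite addn1 big_nat1 dA in hm; lia.
  exists j.+1; split => //; split.
    by move=> l hl; rewrite addSn -addnS; apply: hnz; lia.
  rewrite sum_first // in hm.
  move: hm; rewrite /=; move: (\sum_(_ <= _ < _) _) => S; lia.
- subst m; split => _.
    exists 1%N; split => //; split.
      by move=> l; rewrite ltnS leqn0 => /eqP ->; rewrite addn0.
    by rewrite addn1 big_nat1 dA subn1.
  exact: Zmid sA hCD.
Qed.

End Final.

Unset Implicit Arguments. Set Strict Implicit.

Theorem lemma4p2 (K : fieldType) (s : nat -> K) (k : nat)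
    (A : nat -> {poly K}) (r : nat -> nat -> K) :
  is_cf_expansion (frac_mulXk k (theta s)) A r ->
  forall m : nat,
    wdiag s m k%:Z != 0 <->
    exists j : nat, (0 < j)%N /\
      (forall i : nat, (i < j)%N -> nonzero_frac (r i)) /\
      m = ((\sum_(1 <= i < j.+1) deg (A i)) - 1)%N.
Proof.
move=> [h0 hcf] m.
have hc : forall q, r 0%N q = s (q + k)%N by move=> q; rewrite h0 frac_theta.
rewrite (wall_Z m hc) (main_ind hcf m 0).
split => [[j [j0 [h1 h2]]]|[j [j0 [h1 h2]]]]; exists j; split => //; split.
all: try (by move=> l hl; exact: h1); try (by rewrite h2 add0n).
Qed.
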